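(* Let $\mathcal X\subset\mathbb{R}$ be nonempty, compact and convex with $\mathcal X\subseteq[0,\infty)$, let $X^a,X^b\in\mathbb{R}^{3\times n}$, $t^a,t^b\in\mathbb{R}^3$, $\epsilon_r>0$, and define the cable-driven control term $b(\theta,u)=u\sqrt{\|(X^a\theta+t^a)-(X^b\theta+t^b)\|^2+\epsilon_r}$ for $\theta\in\mathbb{R}^n$, $u\in\mathcal X$. Then for every $u\in\mathcal X$, $b(\cdot,u)$ is twice differentiable with locally Lipschitz second derivatives and is $L$-curvature bounded for a constant $L$ independent of $u\in\mathcal X$, and $\|\partial^2b/\partial\theta\partial u\|$ is uniformly bounded over $\theta\in\mathbb{R}^n$, $u\in\mathcal X$.
   Context: A function $\phi$ is $L$-curvature bounded if $\phi(x)+\frac L2\|x\|^2$ is convex and $\nabla\phi$ is $L$-Lipschitz. *)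

(* Defs.v *)
From HB Require Import structures.
From mathcomp Require Import all_boot all_order all_algebra.
From mathcomp Require Import all_classical all_reals all_analysis.
Set Implicit Arguments. Unset Strict Implicit. Unset Printing Implicit Defensive.
Import Order.TTheory GRing.Theory Num.Theory.
Import numFieldNormedType.Exports.
Local Open Scope classical_set_scope.
Local Open Scope ring_scope.

(* Euclidean norm on column vectors R^m (the library norm on matrices is the
   max-norm, so we define the Euclidean one explicitly). *)
Definition eucl_norm (R : realType) (m : nat) (v : 'cV[R]_m) : R :=
  Num.sqrt (\sum_(i < m) v i 0 ^+ 2).

Definition grad (R : realType) (n : nat) (f : 'cV[R]_n -> R^o) (x : 'cV[R]_n)
  : 'cV[R]_n := \col_i ('d f x (delta_mx i 0)).

Definition hess (R : realType) (n : nat) (f : 'cV[R]_n -> R^o) (x : 'cV[R]_n)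
  : 'M[R]_n := \matrix_(i, j) ('d (grad f) x (delta_mx j 0)) i 0.

Definition twice_differentiable (R : realType) (n : nat) (f : 'cV[R]_n -> R^o) :=
  (forall x, differentiable f x) /\ (forall x, differentiable (grad f) x).

Definition hess_locally_lipschitz (R : realType) (n : nat) (f : 'cV[R]_n -> R^o) :=
  forall x : 'cV[R]_n, exists r : R, 0 < r /\ exists K : R,
    forall y z : 'cV[R]_n, `|y - x| < r -> `|z - x| < r ->
      `|hess f y - hess f z| <= K * `|y - z|.

Definition convex_fun (R : realType) (n : nat) (f : 'cV[R]_n -> R) :=
  forall (x y : 'cV[R]_n) (t : R), 0 <= t -> t <= 1 ->
    f (t *: x + (1 - t) *: y) <= t * f x + (1 - t) * f y.

Definition curvature_bounded (R : realType) (n : nat) (L : R)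
    (phi : 'cV[R]_n -> R^o) :=
  convex_fun (fun x => phi x + L / 2 * eucl_norm x ^+ 2) /\
  forall x y : 'cV[R]_n,
    eucl_norm (grad phi x - grad phi y) <= L * eucl_norm (x - y).

Definition convex_subset (R : realType) (X : set R) :=
  forall x y t, X x -> X y -> 0 <= t -> t <= 1 -> X (t * x + (1 - t) * y).

Definition cable_b (R : realType) (n : nat) (Xa Xb : 'M[R]_(3, n)) (ta tb : 'cV[R]_3)
    (eps : R) (th : 'cV[R]_n) (u : R) : R :=
  u * Num.sqrt (eucl_norm ((Xa *m th + ta) - (Xb *m th + tb)) ^+ 2 + eps).

(* Main.v *)
Require Import Defs.
From HB Require Import structures.
From mathcomp Require Import all_boot all_order all_algebra.
From mathcomp Require Import all_classical all_reals all_analysis.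
From mathcomp Require Import ring lra.
Set Implicit Arguments. Unset Strict Implicit. Unset Printing Implicit Defensive.
Import Order.TTheory GRing.Theory Num.Theory.
Import numFieldNormedType.Exports.
Local Open Scope classical_set_scope.
Local Open Scope ring_scope.
Section Alg.
Variable R : realType.

Lemma cs_step (A B C x y : R) : 0 <= A -> 0 <= B -> C ^+ 2 <= A * B ->
  (C + x * y) ^+ 2 <= (A + x ^+ 2) * (B + y ^+ 2).
Proof.
move=> hA hB hC.
have h1 : 0 <= A * y ^+ 2 + B * x ^+ 2 by rewrite addr_ge0 // mulr_ge0 // sqr_ge0.
have h2 : (2 * C * x * y) ^+ 2 <= (A * y ^+ 2 + B * x ^+ 2) ^+ 2.
  have : 0 <= (A * y ^+ 2 - B * x ^+ 2) ^+ 2 by rewrite sqr_ge0.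
  have : 0 <= (x * y) ^+ 2 * (A * B - C ^+ 2).
    by rewrite mulr_ge0 ?sqr_ge0 // subr_ge0.
  nra.
have h3 : `|2 * C * x * y| <= A * y ^+ 2 + B * x ^+ 2.
  by rewrite -ler_sqr ?nnegrE ?normr_ge0 // real_normK ?num_real.
have h4 := le_trans (ler_norm _) h3.
nra.
Qed.

Lemma cauchy_schwarz m (f g : 'I_m -> R) :
  (\sum_i f i * g i) ^+ 2 <= (\sum_i f i ^+ 2) * (\sum_i g i ^+ 2).
Proof.
elim: m f g => [|m IH] f g; first by rewrite !big_ord0 mul0r expr0n.
rewrite !big_ord_recr /=; apply: cs_step; last exact: IH.
  by apply: sumr_ge0 => i _; rewrite sqr_ge0.
by apply: sumr_ge0 => i _; rewrite sqr_ge0.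
Qed.

Lemma sum_sqr_le_sqr_sum m (f : 'I_m -> R) : (forall i, 0 <= f i) ->
  \sum_i f i ^+ 2 <= (\sum_i f i) ^+ 2.
Proof.
elim: m f => [|m IH] f hf; first by rewrite !big_ord0 expr0n.
rewrite !big_ord_recr /=.
have h := IH (fun i => f (widen_ord (leqnSn m) i)) (fun i => hf _).
have h0 : 0 <= \sum_(i < m) f (widen_ord (leqnSn m) i) by apply: sumr_ge0.
have := hf ord_max; nra.
Qed.

Lemma eucl_le_sum m (v : 'cV[R]_m) : eucl_norm v <= \sum_i `|v i 0|.
Proof.
rewrite /eucl_norm -(ger0_norm (sumr_ge0 _ (fun i _ => normr_ge0 (v i 0)))).
rewrite -sqrtr_sqr ler_wsqrtr //.
apply: le_trans (sum_sqr_le_sqr_sum (fun i => normr_ge0 (v i 0))).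
by apply: ler_sum => i _; rewrite real_normK // num_real.
Qed.

Lemma coord_le_eucl m (v : 'cV[R]_m) i : `|v i 0| <= eucl_norm v.
Proof.
rewrite /eucl_norm -sqrtr_sqr ler_wsqrtr // (bigD1 i) //= lerDl.
by apply: sumr_ge0 => j _; rewrite sqr_ge0.
Qed.

Lemma eucl_sqr m (v : 'cV[R]_m) : eucl_norm v ^+ 2 = \sum_i v i 0 ^+ 2.
Proof. by rewrite /eucl_norm sqr_sqrtr // sumr_ge0 // => i _; rewrite sqr_ge0. Qed.

End Alg.
Section Calc.
Variables (R : realType) (n : nat).
Local Notation V := 'cV[R]_n.

Lemma isdM (f g : V -> R^o) x v df dg : is_derive x v f df -> is_derive x v g dg ->
  is_derive x v (fun t => f t * g t) (f x * dg + g x * df).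
Proof. move=> H1 H2; exact: (is_deriveM H1 H2). Qed.

Lemma isdD (f g : V -> R^o) x v df dg : is_derive x v f df -> is_derive x v g dg ->
  is_derive x v (fun t => f t + g t) (df + dg).
Proof. move=> H1 H2; exact: (is_deriveD H1 H2). Qed.

Lemma isdC (k : R^o) x v : is_derive x v (fun t : V => k) 0.
Proof. exact: is_derive_cst. Qed.

Lemma isdV (f : V -> R^o) x v df : f x != 0 -> is_derive x v f df ->
  is_derive x v (fun t => (f t)^-1) (- (f x) ^- 2 * df).
Proof. move=> H0 H1; apply: DeriveDef; first exact: derivableV.
by rewrite deriveV // derive_val. Qed.

Lemma isdS (F : 'I_n -> V -> R^o) x v dF : (forall i, is_derive x v (F i) (dF i)) ->
  is_derive x v (fun t => \sum_i F i t) (\sum_i dF i).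
Proof. move=> H; have := is_derive_sum H.
by rewrite [X in is_derive _ _ X _ -> _](_ : _ = (fun t => \sum_i F i t)) // ; apply/funext => t; rewrite fct_sumE. Qed.

Lemma isd_coord (x v : V) j : is_derive x v (fun t : V => (t j 0 : R^o)) (v j 0).
Proof.
have dx : derivable (id : V -> V) x v by exact: derivable_id.
have := derive_mx dx; rewrite derive_id => E.
apply: DeriveDef.
  by apply: diff_derivable; exact: differentiable_coord.
by rewrite {2}E mxE.
Qed.

Lemma isd_sqrt (f : V -> R^o) x v df : differentiable f x -> 0 < f x -> is_derive x v f df ->
  is_derive x v (fun t => Num.sqrt (f t)) (df / (2 * Num.sqrt (f x))).
Proof.
move=> Df fx Hd.
have Ds : differentiable (@Num.sqrt R : R^o -> R^o) (f x).
  by apply/derivable1_diffP; apply: ex_derive; exact: is_derive1_sqrt.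
have Dc : differentiable (Num.sqrt \o f) x by exact: differentiable_comp.
apply: DeriveDef; first exact: diff_derivable.
rewrite deriveE // diff_comp // /= deriv1E; last first.
  by apply: ex_derive; exact: is_derive1_sqrt.
rewrite derive1E derive_sqrt // -deriveE // derive_val.
by rewrite /GRing.scale /= mulrC.
Qed.


Lemma dfM (f g : V -> R^o) x : differentiable f x -> differentiable g x ->
  differentiable (fun t => f t * g t) x.
Proof. move=> H1 H2; exact: (differentiableM H1 H2). Qed.

Lemma dfD (f g : V -> R^o) x : differentiable f x -> differentiable g x ->
  differentiable (fun t => f t + g t) x.
Proof. move=> H1 H2; exact: (differentiableD H1 H2). Qed.

Lemma dfC (k : R^o) x : differentiable (fun t : V => k) x.
Proof. exact: differentiable_cst. Qed.

Lemma dfV (f : V -> R^o) x : differentiable f x -> f x != 0 ->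
  differentiable (fun t => (f t)^-1) x.
Proof. move=> H1 H2; exact: differentiableV. Qed.

Lemma dfS (F : 'I_n -> V -> R^o) x : (forall i, differentiable (F i) x) ->
  differentiable (fun t => \sum_i F i t) x.
Proof. move=> H; have := differentiable_sum H.
by rewrite [X in differentiable X _ -> _](_ : _ = (fun t => \sum_i F i t)) // ; apply/funext => t; rewrite fct_sumE. Qed.

Lemma dfS' m (F : 'I_m -> V -> R^o) x : (forall i, differentiable (F i) x) ->
  differentiable (fun t => \sum_i F i t) x.
Proof. move=> H; have := differentiable_sum H.
by rewrite [X in differentiable X _ -> _](_ : _ = (fun t => \sum_i F i t)) // ; apply/funext => t; rewrite fct_sumE. Qed.

Lemma isdS' m (F : 'I_m -> V -> R^o) x v dF : (forall i, is_derive x v (F i) (dF i)) ->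
  is_derive x v (fun t => \sum_i F i t) (\sum_i dF i).
Proof. move=> H; have := is_derive_sum H.
by rewrite [X in is_derive _ _ X _ -> _](_ : _ = (fun t => \sum_i F i t)) // ; apply/funext => t; rewrite fct_sumE. Qed.

Lemma df_coord x j : differentiable (fun t : V => (t j 0 : R^o)) x.
Proof. exact: differentiable_coord. Qed.

Lemma df_sqrt (f : V -> R^o) x : differentiable f x -> 0 < f x ->
  differentiable (fun t => Num.sqrt (f t)) x.
Proof.
move=> Df fx.
have Ds : differentiable (@Num.sqrt R : R^o -> R^o) (f x).
  by apply/derivable1_diffP; apply: ex_derive; exact: is_derive1_sqrt.
exact: (differentiable_comp Df Ds).
Qed.

End Calc.
Section Main.
Variables (R : realType) (m n : nat) (A : 'M[R]_(m, n)) (c : 'cV[R]_m) (e : R).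
Hypothesis he : 0 < e.
Local Notation V := 'cV[R]_n.

Definition cw (t : V) (k : 'I_m) : R := \sum_j A k j * t j 0 + c k 0.
Definition cq (t : V) : R := \sum_k cw t k ^+ 2 + e.
Definition cS (t : V) : R := Num.sqrt (cq t).
Definition ca (t : V) (i : 'I_n) : R := \sum_k A k i * cw t k.

Lemma cq_gt0 t : 0 < cq t.
Proof. by rewrite /cq ltr_wpDl // sumr_ge0 // => k _; rewrite sqr_ge0. Qed.

Lemma cS_gt0 t : 0 < cS t.
Proof. by rewrite sqrtr_gt0 cq_gt0. Qed.

Lemma cS_neq0 t : cS t != 0.
Proof. by rewrite gt_eqF // cS_gt0. Qed.

Lemma cS_sqr t : cS t ^+ 2 = cq t.
Proof. by rewrite sqr_sqrtr // ltW // cq_gt0. Qed.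

Lemma cS_ge t : Num.sqrt e <= cS t.
Proof. by rewrite ler_wsqrtr // /cq lerDr sumr_ge0 // => k _; rewrite sqr_ge0. Qed.

Lemma cw_le t k : `|cw t k| <= cS t.
Proof.
rewrite -sqrtr_sqr ler_wsqrtr // /cq (bigD1 k) //= -addrA lerDl addr_ge0 ?(ltW he) //.
by rewrite sumr_ge0 // => j _; rewrite sqr_ge0.
Qed.

Lemma se_gt0 : 0 < Num.sqrt e.
Proof. by rewrite sqrtr_gt0. Qed.

Lemma df_cw x k : differentiable (fun t => (cw t k : R^o)) x.
Proof.
apply: dfD; last exact: dfC.
apply: dfS => j; apply: dfM; [exact: dfC | exact: df_coord].
Qed.

Lemma isd_cw x v k : is_derive x v (fun t => (cw t k : R^o)) (\sum_j A k j * v j 0).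
Proof.
apply: is_derive_eq.
  apply: (isdD _ (isdC _ _ _)).
  apply: isdS => j; exact: (isdM (isdC _ _ _) (isd_coord _ _ _)).
by rewrite addr0; apply: eq_bigr => j _; rewrite mulr0 addr0.
Qed.

Lemma df_cq x : differentiable (fun t => (cq t : R^o)) x.
Proof.
apply: dfD; last exact: dfC.
apply: dfS' => k; rewrite /GRing.exp /=; apply: dfM; exact: df_cw.
Qed.

Lemma isd_cq x v : is_derive x v (fun t => (cq t : R^o))
  (\sum_k 2 * cw x k * (\sum_j A k j * v j 0)).
Proof.
apply: is_derive_eq.
  apply: (isdD _ (isdC _ _ _)).
  apply: isdS' => k; rewrite /GRing.exp /=; exact: (isdM (isd_cw _ _ _) (isd_cw _ _ _)).
rewrite addr0; apply: eq_bigr => k _. ring.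
Qed.

Lemma df_cS x : differentiable (fun t => (cS t : R^o)) x.
Proof. apply: df_sqrt; [exact: df_cq | exact: cq_gt0]. Qed.

Lemma isd_cS x v : is_derive x v (fun t => (cS t : R^o))
  ((\sum_k cw x k * (\sum_j A k j * v j 0)) / cS x).
Proof.
apply: is_derive_eq.
  apply: isd_sqrt; [exact: df_cq | exact: cq_gt0 | exact: isd_cq].
rewrite -/(cS x).
have := cS_neq0 x => hS.
rewrite (eq_bigr (fun k => 2 * (cw x k * \sum_j A k j * v j 0))); last first.
  by move=> k _; rewrite mulrA.
rewrite -mulr_sumr; field; by rewrite hS.
Qed.


Lemma dval (f : V -> R^o) x v df : is_derive x v f df -> 'D_v f x = df.
Proof. by move=> H; rewrite derive_val. Qed.

Lemma sum_delta k i : \sum_j A k j * (delta_mx i 0 : V) j 0 = A k i.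
Proof.
rewrite (bigD1 i) //= big1 ?addr0; first by rewrite !mxE !eqxx mulr1.
by move=> j hj; rewrite mxE (negbTE hj) mulr0.
Qed.

Lemma df_f u x : differentiable (fun t => (u * cS t : R^o)) x.
Proof. apply: dfM; [exact: dfC | exact: df_cS]. Qed.

Lemma isd_f u x v : is_derive x v (fun t => (u * cS t : R^o))
  (u * ((\sum_k cw x k * (\sum_j A k j * v j 0)) / cS x)).
Proof. apply: is_derive_eq; first exact: (isdM (isdC _ _ _) (isd_cS _ _)). by rewrite mulr0 addr0. Qed.

Definition G u := fun x : V => \col_i (u * ca x i / cS x) : V.

Lemma grad_f u : grad (fun t => (u * cS t : R^o)) = G u.
Proof.
apply/funext => x; apply/matrixP => i j; rewrite !mxE -deriveE; last exact: df_f.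
rewrite (dval (isd_f u x _)) mulrA; congr (_ * _ / _).
by apply: eq_bigr => k _; rewrite sum_delta mulrC.
Qed.

Lemma df_ca x i : differentiable (fun t => (ca t i : R^o)) x.
Proof. apply: dfS' => k; apply: dfM; [exact: dfC | exact: df_cw]. Qed.

Definition cP i j := \sum_k A k i * A k j.

Lemma isd_ca x v i : is_derive x v (fun t => (ca t i : R^o))
   (\sum_k A k i * (\sum_j A k j * v j 0)).
Proof.
apply: is_derive_eq.
  apply: isdS' => k; exact: (isdM (isdC _ _ _) (isd_cw _ _ _)).
by apply: eq_bigr => k _; rewrite mulr0 addr0.
Qed.

Lemma df_col (F : 'I_n -> V -> R^o) x : (forall i, differentiable (F i) x) ->
  differentiable (fun t => \col_i F i t : V) x.
Proof.
move=> H.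
have -> : (fun t => \col_i F i t : V) = \sum_i (fun t => F i t *: (delta_mx i 0 : V)).
  apply/funext => t; rewrite fct_sumE [LHS]matrix_sum_delta.
  by apply: eq_bigr => i _; rewrite big_ord1 mxE.
apply: differentiable_sum => i; exact: differentiableZl.
Qed.

Lemma df_G u x : differentiable (G u) x.
Proof.
apply: df_col => i.
apply: dfM; last by apply: dfV; [exact: df_cS | exact: cS_neq0].
apply: dfM; [exact: dfC | exact: df_ca].
Qed.

Lemma hess_f u y i j : hess (fun t => (u * cS t : R^o)) y i j =
  u * (cP i j / cS y - ca y i * ca y j / cS y ^+ 3).
Proof.
rewrite /hess mxE grad_f -deriveE; last exact: df_G.
rewrite derive_mx; last exact/diff_derivable/df_G.
rewrite mxE.
rewrite [X in 'D_ _ X _](_ : _ = fun t => (u * ca t i * (cS t)^-1 : R^o)); last first.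
  by apply/funext => t; rewrite mxE.
rewrite (dval (isdM (isdM (isdC u _ _) (isd_ca _ _ _)) (isdV (cS_neq0 _) (isd_cS _ _)))).
rewrite mulr0 addr0.
have -> : \sum_k cw y k * (\sum_j0 A k j0 * (delta_mx j 0 : V) j0 0) = ca y j.
  by apply: eq_bigr => k _; rewrite sum_delta mulrC.
have -> : \sum_k A k i * (\sum_j0 A k j0 * (delta_mx j 0 : V) j0 0) = cP i j.
  by apply: eq_bigr => k _; rewrite sum_delta.
have := cS_neq0 y => hS.
field; by rewrite hS.
Qed.


Section Est.
Variable d : V -> V -> R.
Hypothesis hd0 : forall y z, 0 <= d y z.
Hypothesis hdj : forall (y z : V) j, `|y j 0 - z j 0| <= d y z.

Definition LB (f : V -> R) (B Lc : R) :=
  (forall t, `|f t| <= B) /\ (forall y z, `|f y - f z| <= Lc * d y z).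

Lemma LB_B0 f B Lc : LB f B Lc -> 0 <= B.
Proof. by case=> h _; exact: le_trans (normr_ge0 _) (h 0). Qed.

Lemma lb_weak f B Lc B' Lc' : B <= B' -> Lc <= Lc' -> LB f B Lc -> LB f B' Lc'.
Proof.
move=> hB hL [h1 h2]; split=> [t|y z]; first exact: le_trans (h1 t) hB.
by apply: le_trans (h2 y z) _; rewrite ler_wpM2r.
Qed.

Lemma lb_const k : LB (fun=> k) `|k| 0.
Proof. by split=> // y z; rewrite subrr normr0 mul0r. Qed.

Lemma lb_mul f g B1 L1 B2 L2 : LB f B1 L1 -> LB g B2 L2 ->
  LB (fun t => f t * g t) (B1 * B2) (B1 * L2 + B2 * L1).
Proof.
move=> hf hg; have hB1 := LB_B0 hf; have hB2 := LB_B0 hg.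
case: hf => f1 f2; case: hg => g1 g2; split=> [t|y z].
  by rewrite normrM ler_pM.
have -> : f y * g y - f z * g z = f y * (g y - g z) + g z * (f y - f z) by ring.
apply: le_trans (ler_normD _ _) _; rewrite !normrM mulrDl -!mulrA.
by apply: lerD; apply: ler_pM.
Qed.

Lemma lb_add f g B1 L1 B2 L2 : LB f B1 L1 -> LB g B2 L2 ->
  LB (fun t => f t + g t) (B1 + B2) (L1 + L2).
Proof.
case=> f1 f2 [g1 g2]; split=> [t|y z].
  by apply: le_trans (ler_normD _ _) _; apply: lerD.
have -> : f y + g y - (f z + g z) = (f y - f z) + (g y - g z) by ring.
by apply: le_trans (ler_normD _ _) _; rewrite mulrDl; apply: lerD.
Qed.

Lemma lb_opp f B Lc : LB f B Lc -> LB (fun t => - f t) B Lc.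
Proof.
case=> f1 f2; split=> [t|y z]; first by rewrite normrN.
by rewrite -opprD normrN.
Qed.

Lemma lb_sum p (F : 'I_p -> V -> R) B Lc : (forall k, LB (F k) (B k) (Lc k)) ->
  LB (fun t => \sum_k F k t) (\sum_k B k) (\sum_k Lc k).
Proof.
elim: p F B Lc => [|p IH] F B Lc H.
  have -> : (fun t => \sum_(k < 0) F k t) = fun=> 0 by apply/funext => t; rewrite big_ord0.
  by rewrite !big_ord0; apply: lb_weak (lb_const 0); rewrite ?normr0.
have -> : (fun t => \sum_k F k t) = (fun t => \sum_(k < p) F (widen_ord (leqnSn p) k) t + F ord_max t).
  by apply/funext => t; rewrite big_ord_recr.
rewrite !big_ord_recr /=; apply: lb_add => //; exact: IH.
Qed.

Definition ak (k : 'I_m) := \sum_j `|A k j|.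
Definition alpha := \sum_k ak k.

Lemma ak_ge0 k : 0 <= ak k.
Proof. by apply: sumr_ge0 => j _. Qed.

Lemma alpha_ge0 : 0 <= alpha.
Proof. by apply: sumr_ge0 => k _; exact: ak_ge0. Qed.

Lemma ak_le k : ak k <= alpha.
Proof. by rewrite /alpha (bigD1 k) //= lerDl sumr_ge0 // => i _; exact: ak_ge0. Qed.

Lemma Aki_le k i : `|A k i| <= ak k.
Proof. by rewrite /ak (bigD1 i) //= lerDl sumr_ge0. Qed.

Lemma colA_le i : \sum_k `|A k i| <= alpha.
Proof. by apply: ler_sum => k _; exact: Aki_le. Qed.

Lemma Aki_le_alpha k i : `|A k i| <= alpha.
Proof. exact: le_trans (Aki_le k i) (ak_le k). Qed.

Lemma dw_le y z k : `|cw y k - cw z k| <= ak k * d y z.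
Proof.
have -> : cw y k - cw z k = \sum_j A k j * (y j 0 - z j 0).
  rewrite /cw opprD addrACA subrr addr0 -sumrB.
  by apply: eq_bigr => j _; rewrite mulrBr.
apply: le_trans (ler_norm_sum _ _ _) _; rewrite /ak mulr_suml.
by apply: ler_sum => j _; rewrite normrM ler_wpM2l.
Qed.

Lemma sdw_le y z : \sum_k `|cw y k - cw z k| <= alpha * d y z.
Proof. by rewrite /alpha mulr_suml; apply: ler_sum => k _; exact: dw_le. Qed.

Lemma dS_le y z : `|cS y - cS z| <= alpha * d y z.
Proof.
apply: le_trans (sdw_le y z).
have hp : 0 < cS y + cS z by rewrite addr_gt0 // cS_gt0.
rewrite -(ler_pM2r hp).
have -> : `|cS y - cS z| * (cS y + cS z) = `|\sum_k (cw y k - cw z k) * (cw y k + cw z k)|.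
  rewrite -(gtr0_norm hp) -normrM; congr `|_|.
  have -> : (cS y - cS z) * (cS y + cS z) = cS y ^+ 2 - cS z ^+ 2 by ring.
  rewrite !cS_sqr /cq opprD addrACA subrr addr0 -sumrB.
  by apply: eq_bigr => k _; ring.
apply: le_trans (ler_norm_sum _ _ _) _; rewrite mulr_suml.
apply: ler_sum => k _; rewrite normrM ler_wpM2l //.
apply: le_trans (ler_normD _ _) _; apply: lerD; exact: cw_le.
Qed.

Lemma div_le (x p B s : R) : 0 < s -> s <= p -> `|x| <= B -> `|x / p| <= B / s.
Proof.
move=> hs hsp hx; have hp := lt_le_trans hs hsp.
rewrite normrM normfV (gtr0_norm hp) ler_pM //.
  by rewrite invr_ge0 ltW.
by rewrite lef_pV2 // posrE.
Qed.

Lemma lb_r : LB (fun t => (cS t)^-1) (Num.sqrt e)^-1 (alpha / e).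
Proof.
split=> [t|y z].
  by rewrite -[_^-1]mul1r -[(Num.sqrt e)^-1]mul1r div_le ?normr1 // ?se_gt0 // cS_ge.
have -> : (cS y)^-1 - (cS z)^-1 = (cS z - cS y) / (cS y * cS z).
  by field; rewrite !cS_neq0.
rewrite mulrAC; apply: div_le => //.
  rewrite -[e]sqr_sqrtr ?(ltW he) // expr2; apply: ler_pM; (try exact: cS_ge); exact: (ltW se_gt0).
by rewrite distrC dS_le.
Qed.

Lemma lb_F k : LB (fun t => cw t k / cS t) 1 (2 * alpha / Num.sqrt e).
Proof.
split=> [t|y z].
  by rewrite -[1](divff (cS_neq0 t)) div_le // ?cS_gt0 // cw_le.
have -> : cw y k / cS y - cw z k / cS z =
   (cw y k - cw z k) / cS y + (cw z k / cS z) * (cS z - cS y) / cS y.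
  by field; rewrite !cS_neq0.
have -> : 2 * alpha / Num.sqrt e * d y z = alpha * d y z / Num.sqrt e + alpha * d y z / Num.sqrt e.
  by ring.
apply: le_trans (ler_normD _ _) _; apply: lerD.
  apply: div_le; rewrite ?se_gt0 ?cS_ge //.
  by apply: le_trans (dw_le y z k) _; rewrite ler_wpM2r // ak_le.
apply: div_le; rewrite ?se_gt0 ?cS_ge //.
rewrite normrM; apply: le_trans (_ : 1 * `|cS z - cS y| <= _).
  apply: ler_wpM2r => //.
  by rewrite -[1](divff (cS_neq0 z)) div_le // ?cS_gt0 // cw_le.
by rewrite mul1r distrC dS_le.
Qed.

Lemma lb_qq i : LB (fun t => ca t i / cS t) alpha (alpha * (2 * alpha / Num.sqrt e)).
Proof.
have -> : (fun t => ca t i / cS t) = (fun t => \sum_k A k i * (cw t k / cS t)).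
  by apply/funext => t; rewrite /ca mulr_suml; apply: eq_bigr => k _; rewrite mulrA.
have hL : 0 <= 2 * alpha / Num.sqrt e.
  by rewrite mulr_ge0 ?mulr_ge0 ?alpha_ge0 // invr_ge0 ltW // se_gt0.
apply: lb_weak (lb_sum (fun k => lb_mul (lb_const (A k i)) (lb_F k))).
  by apply: le_trans (colA_le i); apply: ler_sum => k _; rewrite mulr1.
apply: le_trans (_ : \sum_k `|A k i| * (2 * alpha / Num.sqrt e) <= _).
  by apply: ler_sum => k _; rewrite mulr0 addr0.
by rewrite -mulr_suml ler_wpM2r // colA_le.
Qed.

End Est.

Lemma entry_le p r (M : 'M[R]_(p, r)) i j : `|M i j| <= `|M|.
Proof.
rewrite [leRHS]/Num.Def.normr/= mx_normrE.
by apply: le_trans (le_bigmax _ _ (i, j)).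
Qed.

Lemma cP_le i j : `|cP i j| <= alpha * alpha.
Proof.
apply: le_trans (ler_norm_sum _ _ _) _.
apply: le_trans (_ : \sum_k `|A k i| * alpha <= _).
  apply: ler_sum => k _; rewrite normrM ler_wpM2l //; exact: Aki_le_alpha.
by rewrite -mulr_suml ler_wpM2r ?alpha_ge0 // colA_le.
Qed.

Lemma hess_entry u t i j : hess (fun t => (u * cS t : R^o)) t i j = u * (cP i j * (cS t)^-1 +
   - (ca t i / cS t * (ca t j / cS t * (cS t)^-1))).
Proof. by rewrite hess_f; field; rewrite cS_neq0. Qed.

Lemma hess_diff u y z i j K : `|u * (cP i j * (cS y)^-1 +
   - (ca y i / cS y * (ca y j / cS y * (cS y)^-1))) - u * (cP i j * (cS z)^-1 +
   - (ca z i / cS z * (ca z j / cS z * (cS z)^-1)))| <= K ->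
 `|hess (fun t => (u * cS t : R^o)) y i j - hess (fun t => (u * cS t : R^o)) z i j| <= K.
Proof.
move=> H.
have E := congr2 (fun a b => `|a - b|) (hess_entry u y i j) (hess_entry u z i j).
(cbv beta in E).
exact: (eq_ind_r (fun x => x <= K) H E).
Qed.

Lemma hess_lip u : hess_locally_lipschitz (fun t => (u * cS t : R^o)).
Proof.
move=> x; exists 1; split => //.
pose d := fun y z : V => `|y - z|.
have hd0 : forall y z, 0 <= d y z by move=> y z; exact: normr_ge0.
have hdj : forall (y z : V) j, `|y j 0 - z j 0| <= d y z.
  by move=> y z j; rewrite /d; apply: le_trans (entry_le (y - z) j 0); rewrite !mxE.
pose H := fun i j => lb_mul (lb_const d u) (lb_add
   (lb_mul (lb_weak hd0 (cP_le i j) (lexx 0) (lb_const d (cP i j))) (lb_r hdj))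
   (lb_opp (lb_mul (lb_qq hd0 hdj i) (lb_mul (lb_qq hd0 hdj j) (lb_r hdj))))).
match type of H with forall _ _, LB _ _ _ ?K => exists `|K| end.
move=> y z _ _.
rewrite [leLHS]/Num.Def.normr/= mx_normrE.
apply: bigmax_le => [|[i j] _]; first by rewrite mulr_ge0.
have [_ Hl] := H i j.
have -> : (hess (fun t => (u * cS t : R^o)) y - hess (fun t => (u * cS t : R^o)) z) (i, j).1 (i, j).2
   = hess (fun t => (u * cS t : R^o)) y i j - hess (fun t => (u * cS t : R^o)) z i j.
  by rewrite [LHS]mxE [X in _ + X]mxE.
have Hl' := Hl y z; cbv beta in Hl'.
apply: le_trans (hess_diff Hl') _.
by rewrite ler_wpM2r // ?real_ler_norm ?num_real.
Qed.

Lemma cS_convex (x y : V) (t : R) : 0 <= t -> t <= 1 ->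
  cS (t *: x + (1 - t) *: y) <= t * cS x + (1 - t) * cS y.
Proof.
move=> t0 t1; set s := 1 - t; have s0 : 0 <= s by rewrite subr_ge0.
set z := t *: x + s *: y.
have Ew : forall k, cw z k = t * cw x k + s * cw y k.
  move=> k; rewrite /cw.
  have -> : \sum_j A k j * z j 0 = t * \sum_j A k j * x j 0 + s * \sum_j A k j * y j 0.
    rewrite !mulr_sumr -big_split; apply: eq_bigr => j _; rewrite /z !mxE /=; ring.
  rewrite /s; ring.
set Sa := \sum_k cw x k ^+ 2; set Sb := \sum_k cw y k ^+ 2.
set Sab := \sum_k cw x k * cw y k.
have Eq : cq z = t ^+ 2 * Sa + s ^+ 2 * Sb + 2 * t * s * Sab + e.
  rewrite /cq; congr (_ + _); rewrite /Sa /Sb /Sab !mulr_sumr -!big_split.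
  by apply: eq_bigr => k _; rewrite Ew /=; ring.
have hx : cS x ^+ 2 = Sa + e by rewrite cS_sqr.
have hy : cS y ^+ 2 = Sb + e by rewrite cS_sqr.
have hxy : Sab + e <= cS x * cS y.
  have hcs := cauchy_schwarz (fun k => cw x k) (fun k => cw y k).
  have h := cs_step (Num.sqrt e) (Num.sqrt e)
     (sumr_ge0 _ (fun k _ => sqr_ge0 (cw x k))) (sumr_ge0 _ (fun k _ => sqr_ge0 (cw y k))) hcs.
  rewrite -expr2 sqr_sqrtr ?(ltW he) // -/Sa -/Sb -/Sab -hx -hy -exprMn in h.
  apply: le_trans (ler_norm _) _.
  have hp : 0 <= cS x * cS y by rewrite mulr_ge0 // ltW // cS_gt0.
  rewrite -sqrtr_sqr -(ger0_norm hp) -sqrtr_sqr; exact: ler_wsqrtr.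
have hxy' : 0 <= cS x * cS y - Sab - e by move: hxy; lra.
have hts : 0 <= t * s * (cS x * cS y - Sab - e) by rewrite !mulr_ge0.
have hR : 0 <= t * cS x + s * cS y by rewrite addr_ge0 // mulr_ge0 // ltW // cS_gt0.
rewrite /cS -/(cS x) -/(cS y) -(ger0_norm hR) -sqrtr_sqr ler_wsqrtr //.
rewrite Eq -subr_ge0.
have hst : t + s = 1 by rewrite /s; ring.
have hx' : cS x ^+ 2 - Sa - e = 0 by rewrite hx; ring.
have hy' : cS y ^+ 2 - Sb - e = 0 by rewrite hy; ring.
have -> : (t * cS x + s * cS y) ^+ 2 - (t ^+ 2 * Sa + s ^+ 2 * Sb + 2 * t * s * Sab + e) =
  t ^+ 2 * (cS x ^+ 2 - Sa - e) + s ^+ 2 * (cS y ^+ 2 - Sb - e) +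
  2 * (t * s * (cS x * cS y - Sab - e)) + e * ((t + s) ^+ 2 - 1) by ring.
rewrite hx' hy' hst expr1n subrr !mulr0 !add0r addr0.
by rewrite mulr_ge0.
Qed.

Definition Lq := alpha * (2 * alpha / Num.sqrt e).

Lemma Lq_ge0 : 0 <= Lq.
Proof. by rewrite /Lq !mulr_ge0 ?alpha_ge0 // invr_ge0 ltW // se_gt0. Qed.

Lemma grad_lip u (y z : V) :
  eucl_norm (G u y - G u z) <= (n%:R * `|u| * Lq) * eucl_norm (y - z).
Proof.
pose d := fun y z : V => eucl_norm (y - z).
have hd0 : forall y z, 0 <= d y z by move=> ? ?; rewrite /d /eucl_norm sqrtr_ge0.
have hdj : forall (y z : V) j, `|y j 0 - z j 0| <= d y z.
  by move=> y' z' j; rewrite /d; apply: le_trans (coord_le_eucl (y' - z') j); rewrite !mxE.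
apply: le_trans (eucl_le_sum _) _.
apply: le_trans (_ : \sum_(i < n) `|u| * Lq * d y z <= _); last first.
  rewrite sumr_const card_ord /d le_eqVlt; apply/orP; left; apply/eqP; rewrite -mulr_natl; ring.
apply: ler_sum => i _.
have [_ Hl] := lb_qq hd0 hdj i.
rewrite !mxE -!mulrA -mulrBr normrM ler_wpM2l //.
by move: (Hl y z); rewrite -!mulrA.
Qed.

Lemma f_convex u L : 0 <= u -> 0 <= L ->
  convex_fun (fun x : V => u * cS x + L / 2 * eucl_norm x ^+ 2).
Proof.
move=> u0 L0 x y t t0 t1; rewrite /=.
set s := 1 - t; have s0 : 0 <= s by rewrite subr_ge0.
have h1 : u * cS (t *: x + s *: y) <= u * (t * cS x + s * cS y).
  by rewrite ler_wpM2l // cS_convex.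
have h2 : eucl_norm (t *: x + s *: y) ^+ 2 <= t * eucl_norm x ^+ 2 + s * eucl_norm y ^+ 2.
  rewrite !eucl_sqr !mulr_sumr -big_split; apply: ler_sum => j _; rewrite !mxE.
  rewrite -subr_ge0.
  have -> : t * x j 0 ^+ 2 + s * y j 0 ^+ 2 - (t * x j 0 + s * y j 0) ^+ 2 =
    t * s * (x j 0 - y j 0) ^+ 2 by rewrite /s; ring.
  by rewrite mulr_ge0 ?sqr_ge0 // mulr_ge0.
have h2' : L / 2 * eucl_norm (t *: x + s *: y) ^+ 2 <=
    L / 2 * (t * eucl_norm x ^+ 2 + s * eucl_norm y ^+ 2).
  by rewrite ler_wpM2l // divr_ge0.
apply: le_trans (lerD h1 h2') _.
by rewrite le_eqVlt; apply/orP; left; apply/eqP; ring.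
Qed.

Lemma dvec_le (x : V) : eucl_norm (\col_i (ca x i / cS x) : V) <= n%:R * alpha.
Proof.
pose d := fun y z : V => eucl_norm (y - z).
have hd0 : forall y z, 0 <= d y z by move=> ? ?; rewrite /d /eucl_norm sqrtr_ge0.
have hdj : forall (y z : V) j, `|y j 0 - z j 0| <= d y z.
  by move=> y' z' j; rewrite /d; apply: le_trans (coord_le_eucl (y' - z') j); rewrite !mxE.
apply: le_trans (eucl_le_sum _) _.
apply: le_trans (_ : \sum_(i < n) alpha <= _); last first.
  by rewrite sumr_const card_ord mulr_natl.
apply: ler_sum => i _; rewrite mxE.
by have [Hb _] := lb_qq hd0 hdj i; exact: Hb.
Qed.

End Main.

Unset Implicit Arguments.
Set Strict Implicit.
Set Printing Implicit Defensive.

Theorem corollary9 (R : realType) (n : nat) (X : set R)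
    (Xa Xb : 'M[R]_(3, n)) (ta tb : 'cV[R]_3) (eps : R) :
  X !=set0 -> compact X -> convex_subset X -> X `<=` [set x | 0 <= x] ->
  0 < eps ->
  (exists L : R,
    forall u, X u ->
      twice_differentiable (fun th => (cable_b Xa Xb ta tb eps th u : R^o)) /\
      hess_locally_lipschitz (fun th => (cable_b Xa Xb ta tb eps th u : R^o)) /\
      curvature_bounded L (fun th => (cable_b Xa Xb ta tb eps th u : R^o))) /\
  (exists M : R,
    forall (th : 'cV[R]_n) (u : R), X u ->
      exists d : 'cV[R]_n,
        is_derive u 1
          (fun v : R => grad (fun th' => (cable_b Xa Xb ta tb eps th' v : R^o)) th) d
        /\ eucl_norm d <= M).
Proof.
move=> [u0 Xu0] cX convX hXpos he.
have cbE : forall th u, cable_b Xa Xb ta tb eps th u = u * cS (Xa - Xb) (ta - tb) eps th.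
  move=> th u; rewrite /cable_b /cS /cq eucl_sqr; congr (_ * Num.sqrt (_ + _)).
  apply: eq_bigr => k _; congr (_ ^+ 2); rewrite /cw.
  have -> : \sum_j (Xa - Xb) k j * th j 0 = \sum_j Xa k j * th j 0 - \sum_j Xb k j * th j 0.
    by rewrite -sumrB; apply: eq_bigr => j _; rewrite !mxE mulrBl.
  rewrite !mxE; ring.
have fE : forall u, (fun th => (cable_b Xa Xb ta tb eps th u : R^o)) =
    (fun th => (u * cS (Xa - Xb) (ta - tb) eps th : R^o)).
  by move=> u; apply/funext => th; rewrite cbE.
have [U hU] : exists U, forall u, X u -> u <= U.
  case: (compact_bounded cX) => M0 [_ HM0].
  exists (M0 + 1) => u Xu.
  have h1 : M0 < M0 + 1 by rewrite ltrDl.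
  have := HM0 (M0 + 1) h1 u Xu; rewrite /=.
  by apply: le_trans; exact: ler_norm.
have U0 : 0 <= U by apply: le_trans (hU _ Xu0); exact: hXpos.
split.
  exists (n%:R * U * Lq (Xa - Xb) eps) => u Xu.
  have hu0 : 0 <= u := hXpos _ Xu.
  rewrite fE; split; [|split].
  - split => x; first exact: df_f.
    by rewrite grad_f //; exact: df_G.
  - exact: hess_lip.
  - split.
      apply: f_convex => //.
      by rewrite mulr_ge0 ?Lq_ge0 // mulr_ge0.
    move=> x y; rewrite grad_f //.
    apply: le_trans (grad_lip _ _ he _ _ _) _.
    rewrite ler_wpM2r ?sqrtr_ge0 // ler_wpM2r ?Lq_ge0 // ler_wpM2l // ger0_norm //.
    exact: hU.
exists (n%:R * alpha (Xa - Xb)) => th u Xu.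
set dv := (\col_i (ca (Xa - Xb) (ta - tb) th i / cS (Xa - Xb) (ta - tb) eps th) : 'cV[R]_n).
exists dv; split; last exact: dvec_le.
have -> : (fun v : R => grad (fun th' => (cable_b Xa Xb ta tb eps th' v : R^o)) th) =
    (fun v : R => v *: dv).
  apply/funext => v; rewrite fE grad_f // /G /dv.
  by apply/matrixP => i j; rewrite !mxE mulrA.
have Hd := @is_diff_scalel R _ u dv.
apply: DeriveDef; first exact/diff_derivable/ex_diff.
by rewrite deriveE ?diff_val ?scale1r //; exact: ex_diff.
Qed.
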